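(* Let $(\mathbf{i},\mathbf{a})\in I^m\times\mathbb{C}^m$, let $\pi\in S_m$ be $(\mathbf{i},\mathbf{a})$-admissible, and let $\pi=s_{k_r}\cdots s_{k_1}$ be a reduced expression in simple transpositions. Then for each $1\le p\le r$, $s_{k_p}$ is $(s_{k_p}\cdots s_{k_1}(\mathbf{i}),\,s_{k_p}\cdots s_{k_1}(\mathbf{a}))$-admissible.
   Context: $I$ is the vertex set of a finite simple bipartite graph $I=I_{\bar0}\sqcup I_{\bar1}$, with every edge oriented from its even to its odd endpoint; write $i\leftarrow j$ if there is an oriented edge from $j$ to $i$. $S_m$ acts on $m$-tuples by $\pi(\mathbf{a})=(a_{\pi^{-1}(1)},\dots,a_{\pi^{-1}(m)})$; $s_k=(k,k+1)$. For $(\mathbf{i},\mathbf{a})\in I^m\times\mathbb{C}^m$, distinct indices $k,l$ are not $(\mathbf{i},\mathbf{a})$-switchable if $i_k\leftarrow i_l$ and $a_k=a_l+1$ (checked for the pair in either order), and switchable otherwise. $\pi\in S_m$ is $(\mathbf{i},\mathbf{a})$-admissible if for every non-switchable pair $k,l$, $\pi(k),\pi(l)$ are in the same relative order as $k,l$. *)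

(* Defs.v *)
From HB Require Import structures.
From mathcomp Require Import all_boot all_order all_algebra all_fingroup.
Set Implicit Arguments. Unset Strict Implicit. Unset Printing Implicit Defensive.
Import GRing.Theory Num.Theory.
Local Open Scope ring_scope.

(* Finite simple bipartite graph on a finite vertex type I:
   e is the (symmetric, irreflexive) adjacency relation,
   par v = true iff v is odd (v in I_1), false iff v is even (v in I_0). *)
Definition simple_bipartite (I : finType) (e : rel I) (par : I -> bool) : Prop :=
  [/\ symmetric e, irreflexive e & forall x y, e x y -> par x != par y].

(* i <- j : there is an oriented edge from j to i (edges go even -> odd). *)
Definition arrow (I : finType) (e : rel I) (par : I -> bool) (i j : I) : bool :=
  [&& e i j, ~~ par j & par i].

Definition act_tuple (m : nat) (T : Type) (pi : {perm 'I_m}) (a : 'I_m -> T) : 'I_m -> T :=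
  fun k => a (pi^-1 k)%g.

(* Simple transposition s_k = (k, k+1), written with 0-based positions;
   only meaningful when k.+1 < m. *)
Definition s_simple (m : nat) (k : nat) : {perm 'I_m.+1} :=
  tperm (inord k) (inord k.+1).

Definition not_switchable (I : finType) (e : rel I) (par : I -> bool)
  (C : ringType) (m : nat) (i : 'I_m -> I) (a : 'I_m -> C) (k l : 'I_m) : bool :=
  (arrow e par (i k) (i l) && (a k == a l + 1))
  || (arrow e par (i l) (i k) && (a l == a k + 1)).

Definition admissible (I : finType) (e : rel I) (par : I -> bool)
  (C : ringType) (m : nat) (i : 'I_m -> I) (a : 'I_m -> C) (pi : {perm 'I_m}) : Prop :=
  forall k l : 'I_m, k != l -> not_switchable e par i a k l ->
    ((k < l)%N = (pi k < pi l)%N).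

(* Word [:: k_1; ...; k_r] represents s_{k_r} ... s_{k_1} (as functions);
   in mathcomp (p * q) applies p first, so this is s_{k_1} * ... * s_{k_r}. *)
Definition word_perm (m : nat) (ks : seq nat) : {perm 'I_m.+1} :=
  (\prod_(k <- ks) s_simple m k)%g.

Definition valid_word (m : nat) (ks : seq nat) : bool := all (fun k => k.+1 < m.+1)%N ks.

Definition reduced_expr (m : nat) (pi : {perm 'I_m.+1}) (ks : seq nat) : Prop :=
  valid_word m ks /\ word_perm m ks = pi /\
  forall ks', valid_word m ks' -> word_perm m ks' = pi -> (size ks <= size ks')%N.

(* Main.v *)
From HB Require Import structures.
From mathcomp Require Import all_boot all_order all_algebra all_fingroup.
From mathcomp Require Import zify.
Require Import Defs.
Set Implicit Arguments. Unset Strict Implicit. Unset Printing Implicit Defensive.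

Lemma ord_neq n (X Y : 'I_n) : X <> Y -> nat_of_ord X <> nat_of_ord Y.
Proof. by move=> H E; apply: H; apply: val_inj. Qed.

Lemma flip_tp n (A B X Y : 'I_n) : nat_of_ord B = (nat_of_ord A).+1 ->
  (X < Y) != (tperm A B X < tperm A B Y) -> tperm A B = tperm X Y.
Proof.
move=> hB.
case: tpermP => [hx|hx|hx1 hx2]; case: tpermP => [hy|hy|hy1 hy2]; subst.
all: rewrite ?ltnn ?eqxx //; try (by rewrite tpermC).
all: try (move/ord_neq: hx1 => hx1); try (move/ord_neq: hx2 => hx2);
     try (move/ord_neq: hy1 => hy1); try (move/ord_neq: hy2 => hy2).
all: move=> H; exfalso; move: H; rewrite hB; lia.
Qed.
Require Import Defs.
Lemma flip_gen (f : nat -> bool) a b : a <= b -> f a != f b ->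
  exists2 j, a < j <= b & f j.-1 != f j.
Proof.
elim: b => [|b IH]; first by rewrite leqn0 => /eqP ->; rewrite eqxx.
rewrite leq_eqVlt => /orP [/eqP ->|]; first by rewrite eqxx.
rewrite ltnS => hab.
case: (boolP (f a == f b)) => [/eqP ->|hne] hf.
  by exists b.+1; [rewrite ltnS hab leqnn | exact: hf].
by case: (IH hab hne) => j /andP [h1 h2] h3; exists j => //; rewrite h1 /= ltnW.
Qed.

Lemma word_cat m s1 s2 : word_perm m (s1 ++ s2) = (word_perm m s1 * word_perm m s2)%g.
Proof. by rewrite /word_perm big_cat. Qed.

Lemma word_step m ks j : j < size ks ->
  word_perm m (take j.+1 ks) = (word_perm m (take j ks) * s_simple m (nth 0 ks j))%g.
Proof. by move=> hj; rewrite (take_nth 0) // -cats1 word_cat {2}/word_perm big_seq1. Qed.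

Lemma word_td m ks j : word_perm m ks = (word_perm m (take j ks) * word_perm m (drop j ks))%g.
Proof. by rewrite -word_cat cat_take_drop. Qed.

Lemma deletion m ks (t : {perm 'I_m.+1}) j1 j2 : (t * t = 1)%g -> j1 < j2 -> j2 < size ks ->
  word_perm m (take j1.+1 ks) = (t * word_perm m (take j1 ks))%g ->
  word_perm m (take j2.+1 ks) = (t * word_perm m (take j2 ks))%g ->
  let ks' := take j1 ks ++ drop j1.+1 (take j2 ks) ++ drop j2.+1 ks in
  [/\ word_perm m ks' = word_perm m ks, size ks' < size ks &
      (valid_word m ks -> valid_word m ks')].
Proof.
move=> htt h12 h2 e1 e2 ks'; split.
- have E2 : word_perm m (take j2 ks) =
     (word_perm m (take j1.+1 ks) * word_perm m (drop j1.+1 (take j2 ks)))%g.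
    by rewrite (word_td m (take j2 ks) j1.+1) take_takel.
  rewrite (word_td m ks j2.+1) e2 E2 e1 /ks' !word_cat.
  by rewrite !mulgA htt mul1g.
- rewrite /ks' !size_cat size_drop size_takel ?size_drop ?size_takel; lia.
- rewrite /valid_word /ks' !all_cat => /allP H.
  apply/and3P; split; apply/allP => x hx; apply: H.
  + exact: mem_take hx.
  + exact: mem_take (mem_drop hx).
  + exact: mem_drop hx.
Qed.

Lemma flip_step m ks j (x y : 'I_m.+1) : j < size ks -> valid_word m ks ->
  (word_perm m (take j ks) x < word_perm m (take j ks) y) !=
  (word_perm m (take j.+1 ks) x < word_perm m (take j.+1 ks) y) ->
  word_perm m (take j.+1 ks) = (tperm x y * word_perm m (take j ks))%g.
Proof.
move=> hj hv; rewrite word_step //; set W := word_perm m (take j ks).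
have hk : nth 0 ks j < m by move/allP: hv; apply; apply: mem_nth.
rewrite !permM /s_simple => hf.
have := flip_tp _ hf; rewrite !inordK; try lia.
move=> /(_ erefl) ->.
by rewrite -tpermJ conjgE mulgA mulgV mul1g.
Qed.


Lemma auxA j J n : j.+1 < J <= n -> [/\ J.-1 != j, j < J.-1, J.-1 < n & J.-1.+1 = J].
Proof. move=> /andP [h1 h2]; split; lia. Qed.
Lemma auxB j J : 0 < J <= j -> [/\ J.-1 != j, J.-1 < j & J.-1.+1 = J].
Proof. move=> /andP [h1 h2]; split; lia. Qed.

Theorem corollary5p7 (I : finType) (e : rel I) (par : I -> bool)
  (C : numClosedFieldType) (m : nat)
  (i : 'I_m.+1 -> I) (a : 'I_m.+1 -> C) (pi : {perm 'I_m.+1}) (ks : seq nat) :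
  simple_bipartite e par ->
  admissible e par i a pi ->
  reduced_expr pi ks ->
  forall p : nat, (1 <= p <= size ks)%N ->
    admissible e par
      (act_tuple (word_perm m (take p ks)) i)
      (act_tuple (word_perm m (take p ks)) a)
      (s_simple m (nth 0%N ks p.-1)).
Proof.
move=> _ hadm [hv [hw hmin]] p /andP [hp1 hp2] u v huv hns.
have [j hpj] : exists j, p = j.+1 by exists p.-1; lia.
subst p; rewrite /= in hns *.
have hj : j < size ks by [].
set W := word_perm m (take j ks).
set W' := word_perm m (take j.+1 ks).
set s := s_simple m (nth 0 ks j).
have hW' : W' = (W * s)%g by rewrite /W' word_step.
case: (boolP ((u < v) == (s u < s v))) => [/eqP //|hflip]; exfalso.
set x := (W'^-1)%g u; set y := (W'^-1)%g v.
have hns' : not_switchable e par i a x y := hns.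
have hxy : x != y by rewrite (inj_eq (@perm_inj _ _)).
have hxyp := hadm x y hxy hns'.
pose f n := word_perm m (take n ks) x < word_perm m (take n ks) y.
have f0 : f 0 = (x < y) by rewrite /f take0 /word_perm big_nil !perm1.
have fr : f (size ks) = (pi x < pi y) by rewrite /f take_size hw.
have hsinv : forall z, s (s z) = z by move=> z; rewrite /s /s_simple tpermK.
have hWx : forall z, W (W'^-1 z)%g = s z.
  by move=> z; rewrite -[in RHS](permKV W' z) hW' permM hsinv.
have fj : f j = (s u < s v) by rewrite /f -/W !hWx.
have fj1 : f j.+1 = (u < v) by rewrite /f -/W' !permKV.
have hfl : f j != f j.+1 by rewrite fj fj1 eq_sym.
have [J [hJ hJs hfJ]] : exists J, [/\ J != j, J < size ks & f J != f J.+1].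
  case: (boolP (f 0 == f j)) => [/eqP h0|h0].
    have : f j.+1 != f (size ks).
      by apply: contra hfl => /eqP ->; rewrite -h0 f0 fr hxyp.
    case/(flip_gen hj) => J /auxA [h1 h2 h3 h4] h5.
    by exists J.-1; split => //; rewrite h4.
  have : 0 <= j by [].
  move=> h; case: (flip_gen h h0) => J /auxB [h1 h2 h4] h5.
  by exists J.-1; split => //; [apply: ltn_trans hj | rewrite h4].
have eJ := flip_step hJs hv hfJ.
have ej := flip_step hj hv hfl.
have htt := tperm2 x y.
have key : forall j1 j2, j1 < j2 -> j2 < size ks ->
   word_perm m (take j1.+1 ks) = (tperm x y * word_perm m (take j1 ks))%g ->
   word_perm m (take j2.+1 ks) = (tperm x y * word_perm m (take j2 ks))%g -> False.
  move=> j1 j2 h12 h2 e1 e2.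
  case: (deletion htt h12 h2 e1 e2) => hw' hs' hv'.
  have := hmin _ (hv' hv); rewrite hw' hw => /(_ erefl).
  by rewrite leqNgt hs'.
case: (ltngtP J j) => hc.
- exact: key hc hj eJ ej.
- exact: key hc hJs ej eJ.
- by move: hJ; rewrite hc eqxx.
Qed.
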